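(* Let $n\ge 1$, let $t\in[0,1]$ and let $g\in A_n$ be an even permutation. Then there exist even permutations $h,k\in A_n$ with $g=hk$ such that $|\mu_h-t\mu_g|\le \tfrac32$ and $|\mu_k-(1-t)\mu_g|\le\tfrac32$.
   Context: For a permutation $\pi$ of $\{1,\dots,n\}$, $\mu_\pi\in\{0,\dots,n\}$ denotes the number of points moved by $\pi$. *)

(* Defs.v *)
From mathcomp Require Import all_boot all_order all_algebra all_fingroup all_solvable.
Set Implicit Arguments. Unset Strict Implicit. Unset Printing Implicit Defensive.

Definition mu (n : nat) (s : 'S_n) : nat := #|[set x | s x != x]|.

(* Main.v *)
Require Import Defs.
From mathcomp Require Import all_boot all_order all_algebra all_fingroup all_solvable.
From mathcomp Require Import alt.
From mathcomp Require Import lra zify.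
Import Order.TTheory GRing.Theory Num.Theory.
Local Open Scope ring_scope.
Set Implicit Arguments. Unset Strict Implicit. Unset Printing Implicit Defensive.

Section Perms.
Variable n : nat.

Definition supp (s : 'S_n) := [set x | s x != x].

Lemma supp_mul (s t : 'S_n) : supp (s * t)%g \subset supp s :|: supp t.
Proof.
apply/subsetP => x; rewrite !inE permM.
case: (eqVneq (s x) x) => [->|//]; by rewrite orFb.
Qed.

Lemma supp_comp (h c : 'S_n) :
  (forall x, x \in supp c -> c (h x) != x) -> supp (h * c)%g = supp h :|: supp c.
Proof.
move=> H; apply/setP => x; rewrite !inE permM.
case: (eqVneq (c x) x) => cx.
- rewrite orbF; congr negb; apply/eqP/eqP => [E|->]; last exact: cx.
  by apply: (@perm_inj _ c); rewrite E cx.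
- by rewrite orbT; apply: H; rewrite inE cx.
Qed.

Lemma supp1 : supp 1%g = set0.
Proof. by apply/setP => y; rewrite !inE perm1 eqxx. Qed.

Section C3.
Variables d e w : 'I_n.
Hypotheses (de : d != e) (dw : d != w) (ew : e != w).
Definition c3 : 'S_n := (tperm d e * tperm d w)%g.
Lemma c3d : c3 d = e.
Proof using de dw ew. rewrite permM tpermL tpermD //; by rewrite eq_sym. Qed.
Lemma c3e : c3 e = w.
Proof using de dw ew. by rewrite permM tpermR tpermL. Qed.
Lemma c3w : c3 w = d.
Proof using de dw ew. by rewrite permM (@tpermD _ d e w) // tpermR. Qed.
Lemma c3x x : x != d -> x != e -> x != w -> c3 x = x.
Proof using de dw ew. move=> xd xe xw; rewrite permM !tpermD //; by rewrite eq_sym. Qed.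
Lemma c3odd : odd_perm c3 = false.
Proof using de dw ew. by rewrite odd_permM !odd_tperm de dw. Qed.
Lemma supp_c3 : supp c3 = [set d; e; w].
Proof using de dw ew.
apply/setP => x; rewrite !inE.
case: (eqVneq x d) => [->|xd]; first by rewrite c3d eq_sym de.
case: (eqVneq x e) => [->|xe]; first by rewrite c3e eq_sym ew.
case: (eqVneq x w) => [->|xw]; first by rewrite c3w dw.
by rewrite c3x // eqxx.
Qed.
Lemma card_c3 : #|supp c3| = 3%N.
Proof using de dw ew.
rewrite supp_c3.
have -> : [set d; e; w] = d |: [set e; w] by apply/setP=> x; rewrite !inE orbA.
rewrite cardsU1 cards2 ew !inE.
by rewrite (negbTE de) (negbTE dw).
Qed.
Lemma in_c3 x : x \in supp c3 -> [\/ x = d, x = e | x = w].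
Proof using de dw ew.
rewrite supp_c3 !inE -orbA; case/orP => [/eqP ->|/orP[/eqP ->|/eqP ->]].
- by apply: Or31. - by apply: Or32. - by apply: Or33.
Qed.
End C3.
End Perms.

Section Good.
Variables (R : realFieldType) (n : nat).
Local Notation Alt := ('Alt_('I_n))%g.

Definition good (g : 'S_n) (d : 'I_n) :=
  forall x : R, 0 <= x <= (mu g)%:R -> exists H K : 'S_n,
    [/\ H \in Alt, K \in Alt, g = (K * H)%g, supp H \subset supp g &
     [/\ `|(mu H)%:R - x| <= 3/2, `|(mu g)%:R - (mu K)%:R - x| <= 3/2 &
       (H != 1%g -> g d != d -> H d = g d /\ (g (g d) != d -> H (g d) = g (g d)))]].

Lemma muE (s : 'S_n) : mu s = #|supp s|. Proof. by []. Qed.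

Lemma step (g g' c : 'S_n) (d d' : 'I_n) :
  g = (g' * c)%g -> c \in Alt -> g' \in Alt -> #|supp c| = 3%N ->
  supp c \subset supp g ->
  c d = g d -> (g (g d) != d -> c (g d) = g (g d)) ->
  g' d = d -> (g (g d) != d -> g' (g d) = g d) ->
  d \in supp c ->
  ((mu g' < mu g)%N -> good g' d') ->
  (forall h', h' != 1%g -> supp h' \subset supp g' ->
     (g' d' != d' -> h' d' = g' d' /\ (g' (g' d') != d' -> h' (g' d') = g' (g' d'))) ->
     (forall x, x \in supp c -> c (h' x) != x) /\
     (forall x, x \in supp c -> (x \in supp h') = (x \in supp g'))) ->
  good g d.
Proof.
move=> Eg cA g'A c3 cg cd cgd g'd g'gd dc Hg' compat.
have Hsg : supp g = supp g' :|: supp c.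
  rewrite Eg; apply: supp_comp => x xc; rewrite -permM -Eg.
  by move/subsetP: cg => /(_ x xc); rewrite inE.
have cardg : (#|supp g| + #|supp g' :&: supp c| = #|supp g'| + 3)%N.
  by rewrite Hsg cardsUI c3.
have dlt : (#|supp g' :&: supp c| < 3)%N.
  rewrite -c3 (cardsD1 d (supp c)) dc add1n ltnS.
  apply: subset_leq_card; apply/subsetP => y; rewrite !inE => /andP[yg yc].
  rewrite yc andbT; apply/eqP => yd; move: yg; by rewrite yd g'd eqxx.
have Dle : (mu g <= mu g' + 3)%N by rewrite !muE; lia.
have Dlt : (mu g' < mu g)%N by rewrite !muE; lia.
have sg'g : supp g' \subset supp g by rewrite Hsg subsetUl.
have fixd : forall h', supp h' \subset supp g' -> h' d = d.
  move=> h' /subsetP /(_ d); rewrite !inE g'd eqxx /=.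
  by case: (eqVneq (h' d) d) => // _ /(_ isT).
have fixgd : forall h', supp h' \subset supp g' -> g (g d) != d -> h' (g d) = g d.
  move=> h' /subsetP /(_ (g d)) Hs gg; move: Hs; rewrite !inE g'gd // eqxx /=.
  by case: (eqVneq (h' (g d)) (g d)) => // _ /(_ isT).
move/(_ Dlt) in Hg'.
move=> x /andP [x0 xm].
have DleR : (mu g)%:R <= (mu g')%:R + 3 :> R.
  by rewrite -[3]/(3%:R) -natrD ler_nat.
have DltR : (mu g')%:R <= (mu g)%:R :> R by rewrite ler_nat ltnW.
case: (lerP x (3/2)) => x1.
  exists 1%g, g; split.
  - exact: group1. - by rewrite Eg groupM. - by rewrite mulg1. - by rewrite supp1 sub0set.
  split.
  - by rewrite muE supp1 cards0 ler_norml; apply/andP; split; lra.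
  - by rewrite subrr ler_norml; apply/andP; split; lra.
  - by rewrite eqxx.
case: (lerP x ((mu g)%:R - (mu g')%:R + 3/2)) => x2.
  exists c, g'; split => //.
  split.
  - by rewrite muE c3 ler_norml; apply/andP; split; lra.
  - by rewrite ler_norml; apply/andP; split; lra.
  - by move=> _ gd; split; [exact: cd | exact: cgd].
have hx : (0:R) <= x - ((mu g)%:R - (mu g')%:R) <= (mu g')%:R by apply/andP; split; lra.
have [h' [k' [h'A k'A Eg' sh' [n1 n2 pc]]]] := Hg' _ hx.
have h'1 : h' != 1%g.
  apply/eqP => h1; move: n1; rewrite h1 muE supp1 cards0 => n1.
  move: n1; rewrite ler_norml.
  move=> /andP[a b].
  move: a b x2 x1; clear -R; move=> a b x2 x1; lra.
have [cmp1 cmp2] := compat h' h'1 sh' (pc h'1).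
have Hsh : supp (h' * c)%g = supp h' :|: supp c by apply: supp_comp.
have cardh : (#|supp (h'*c)%g| + #|supp g'| = #|supp h'| + #|supp g|)%N.
  have EI : supp h' :&: supp c = supp g' :&: supp c.
    apply/setP => y; rewrite !in_setI; case yc: (y \in supp c); last by rewrite !andbF.
    by rewrite !andbT cmp2.
  have := cardsUI (supp h') (supp c); rewrite -Hsh EI.
  have := cardsUI (supp g') (supp c); rewrite -Hsg.
  move=> E1 E2; move: E1 E2; clear; move=> E1 E2; lia.
have cardhR : (mu (h'*c)%g)%:R + (mu g')%:R = (mu h')%:R + (mu g)%:R :> R.
  by rewrite -!natrD !muE cardh.
exists (h' * c)%g, k'; split.
- by rewrite groupM.
- done.
- by rewrite Eg Eg' mulgA.
- by rewrite Hsh Hsg setSU.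
split.
- move: n1; rewrite !ler_norml => /andP[a b]; apply/andP.
  move: a b cardhR; clear; move=> a b E; split; lra.
- move: n2; rewrite !ler_norml => /andP[a b]; apply/andP.
  move: a b cardhR; clear; move=> a b E; split; lra.
- move=> _ gd; rewrite !permM fixd //; split; first exact: cd.
  by move=> gg; rewrite fixgd //; exact: cgd.
Qed.

Lemma fix_sub (h g : 'S_n) y : supp h \subset supp g -> g y = y -> h y = y.
Proof.
move=> /subsetP /(_ y) H gy; move: H; rewrite !inE gy eqxx /=.
by case: (eqVneq (h y) y) => // _ /(_ isT).
Qed.

Lemma mu1 : mu (1%g : 'S_n) = 0%N.
Proof. by rewrite muE supp1 cards0. Qed.

Lemma good1 d : good 1%g d.
Proof.
move=> x /andP[x0]; rewrite mu1 => x1.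
exists 1%g, 1%g; split; rewrite ?group1 ?mulg1 ?subxx //.
rewrite mu1 eqxx subrr; split => //; rewrite sub0r normrN ger0_norm //; lra.
Qed.

Lemma cinv (c : 'S_n) y z : c z = y -> (c^-1)%g y = z.
Proof. by move=> <-; rewrite permK. Qed.

Lemma good_rec (g : 'S_n) :
  (forall g' d', (mu g' < mu g)%N -> g' \in Alt -> good g' d') ->
  g \in Alt -> forall d, good g d.
Proof.
move=> IH gA.
have key : forall d, g d != d -> good g d.
  move=> d gd. set e := g d.
  have de : d != e by rewrite eq_sym.
  have gfe : forall y, g y = e -> y = d by move=> y; apply: perm_inj.
  case: (eqVneq (g e) d) => ge.
  - case: (boolP [exists f, [&& f != d, f != e & g f != f]]) =>
      [/existsP[f /and3P[fd fe gf]] | none]; last first.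
      have gt : g = tperm d e.
        apply/permP => y; case: (eqVneq y d) => [->|yd]; first by rewrite tpermL.
        case: (eqVneq y e) => [->|ye]; first by rewrite tpermR.
        rewrite tpermD 1?eq_sym //.
        move/existsPn: none => /(_ y); rewrite yd ye /= negbK => /eqP //.
      by move: gA; rewrite Alt_even gt odd_tperm de.
    have dw : d != f by rewrite eq_sym.
    have ew : e != f by rewrite eq_sym.
    pose c := c3 d e f.
    have cA : c \in Alt by rewrite Alt_even c3odd.
    pose g' := (g * c^-1)%g.
    have Eg : g = (g' * c)%g by rewrite /g' -mulgA mulVg mulg1.
    have g'E : forall y, g' y = (c^-1)%g (g y) by move=> y; rewrite permM.
    have g'd : g' d = d by rewrite g'E; apply: cinv; exact: (c3d de dw ew).
    have g'e : g' e = f by rewrite g'E ge; apply: cinv; exact: (c3w de dw ew).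
    have gfd : g f != d by apply/eqP; rewrite -ge => /perm_inj /eqP; rewrite (negbTE fe).
    have gfe' : g f != e by apply/eqP => /gfe /eqP; rewrite (negbTE fd).
    have cgf : c (g f) = g f by apply: (c3x de dw ew).
    have g'f : g' f = g f by rewrite g'E; apply: cinv.
    apply: (step (d':=e) Eg cA).
    + by rewrite /g' groupM ?groupV.
    + exact: (card_c3 de dw ew).
    + apply/subsetP => y /(in_c3 de dw ew) [->|->|->]; rewrite inE //.
      by rewrite ge.
    + exact: (c3d de dw ew).
    + by rewrite -/e ge eqxx.
    + exact: g'd.
    + by rewrite -/e ge eqxx.
    + by rewrite inE (c3d de dw ew).
    + by move=> lt; apply: IH => //; rewrite /g' groupM ?groupV.
    + move=> h' h1 sh' pc.
      have h'd : h' d = d by apply: (fix_sub sh').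
      have [h'e h'f] : h' e = f /\ h' f = g f.
        have PC : g' e != e by rewrite g'e eq_sym.
        have [A B] := pc PC.
        split; first by rewrite A.
        by rewrite -g'e B g'e // g'f.
      split=> y /(in_c3 de dw ew) [->|->|->].
      * by rewrite h'd (c3d de dw ew) eq_sym.
      * by rewrite h'e (c3w de dw ew).
      * by rewrite h'f cgf.
      * by rewrite !inE h'd g'd.
      * by rewrite !inE h'e g'e eq_sym ew.
      * by rewrite !inE h'f g'f.
  - pose w := g e.
    have ew : e != w by apply/eqP => /esym /gfe /eqP; rewrite eq_sym (negbTE de).
    have dw : d != w by rewrite eq_sym.
    pose c := c3 d e w.
    have cA : c \in Alt by rewrite Alt_even c3odd.
    pose g' := (g * c^-1)%g.
    have Eg : g = (g' * c)%g by rewrite /g' -mulgA mulVg mulg1.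
    have g'E : forall y, g' y = (c^-1)%g (g y) by move=> y; rewrite permM.
    have g'A : g' \in Alt by rewrite /g' groupM ?groupV.
    have g'd : g' d = d by rewrite g'E; apply: cinv; exact: (c3d de dw ew).
    have g'e : g' e = e by rewrite g'E; apply: cinv; exact: (c3e de dw ew).
    have gww : g w != w by apply/eqP => /perm_inj /eqP; rewrite eq_sym (negbTE ew).
    have csub : supp c \subset supp g.
      apply/subsetP => y /(in_c3 de dw ew) [->|->|->]; rewrite inE //.
      by rewrite eq_sym.
    have gen : forall d', ((mu g' < mu g)%N -> good g' d') by move=> d' lt; apply: IH.
    case: (eqVneq (g w) d) => gw.
    + have g'w : g' w = w by rewrite g'E gw; apply: cinv; exact: (c3w de dw ew).
      apply: (step (d':=d) Eg cA g'A (card_c3 de dw ew) csub (c3d de dw ew) _ g'd _ _ (gen d)).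
      * by move=> _; exact: (c3e de dw ew).
      * by move=> _; exact: g'e.
      * by rewrite inE (c3d de dw ew).
      * move=> h' h1 sh' pc.
        have h'd : h' d = d by apply: (fix_sub sh').
        have h'e : h' e = e by apply: (fix_sub sh').
        have h'w : h' w = w by apply: (fix_sub sh').
        split=> y /(in_c3 de dw ew) [->|->|->].
        -- by rewrite h'd (c3d de dw ew) eq_sym.
        -- by rewrite h'e (c3e de dw ew) eq_sym.
        -- by rewrite h'w (c3w de dw ew).
        -- by rewrite !inE h'd g'd.
        -- by rewrite !inE h'e g'e.
        -- by rewrite !inE h'w g'w.
    + have gwe : g w != e by apply/eqP => /gfe /eqP; rewrite eq_sym (negbTE dw).
      have cgw : c (g w) = g w by apply: (c3x de dw ew).
      have g'w : g' w = g w by rewrite g'E; apply: cinv.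
      apply: (step (d':=w) Eg cA g'A (card_c3 de dw ew) csub (c3d de dw ew) _ g'd _ _ (gen w)).
      * by move=> _; exact: (c3e de dw ew).
      * by move=> _; exact: g'e.
      * by rewrite inE (c3d de dw ew).
      * move=> h' h1 sh' pc.
        have h'd : h' d = d by apply: (fix_sub sh').
        have h'e : h' e = e by apply: (fix_sub sh').
        have PC : g' w != w by rewrite g'w.
        have h'w : h' w = g w by have [A _] := pc PC; rewrite A g'w.
        split=> y /(in_c3 de dw ew) [->|->|->].
        -- by rewrite h'd (c3d de dw ew) eq_sym.
        -- by rewrite h'e (c3e de dw ew) eq_sym.
        -- by rewrite h'w cgw.
        -- by rewrite !inE h'd g'd.
        -- by rewrite !inE h'e g'e.
        -- by rewrite !inE h'w g'w.
move=> d; case: (eqVneq (g d) d) => [gdd|]; last exact: key.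
case: (boolP [exists y, g y != y]) => [/existsP[y gy] | none].
  move=> x hx; have [H [K [a b c' s [n1 n2 _]]]] := key y gy x hx.
  by exists H, K; split => //; split => //; rewrite gdd eqxx.
have -> : g = 1%g.
  by apply/permP => y; move/existsPn: none => /(_ y); rewrite negbK perm1 => /eqP.
exact: good1.
Qed.

Lemma all_good m (g : 'S_n) d : (mu g <= m)%N -> g \in Alt -> good g d.
Proof.
elim: m g d => [|m IHm] g d Hm gA; apply: good_rec => // g' d' lt g'A.
  by move: lt; rewrite (leqNgt) in Hm; case: (mu g) Hm.
by apply: IHm => //; rewrite -ltnS; apply: leq_trans lt Hm.
Qed.
End Good.

Theorem lemma2p2 (R : realFieldType) (n : nat) (hn : (1 <= n)%N) (t : R)
    (ht0 : 0 <= t) (ht1 : t <= 1) (g : 'S_n) (hg : g \in ('Alt_('I_n))%g) :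
  exists h k : 'S_n,
    [/\ h \in ('Alt_('I_n))%g, k \in ('Alt_('I_n))%g, g = (h * k)%g,
        `|(mu h)%:R - t * (mu g)%:R| <= 3 / 2
      & `|(mu k)%:R - (1 - t) * (mu g)%:R| <= 3 / 2].
Proof.
have G := @all_good R n (mu g) g (Ordinal hn) (leqnn _) hg.
have m0 : (0:R) <= (mu g)%:R by rewrite ler0n.
have hx : (0:R) <= (1 - t) * (mu g)%:R <= (mu g)%:R.
  by apply/andP; split; nra.
have [H [K [HA KA EK _ [n1 n2 _]]]] := G _ hx.
exists K, H; split => //.
move: n2; rewrite !ler_norml => /andP[a b]; apply/andP; split; nra.
Qed.
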